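(* For every list (of any length $l$, in any initial order) and every request sequence $\sigma$ of length $n$, there is a deterministic online algorithm with advice that serves $\sigma$ at cost exactly $\mathrm{OPT}(\sigma)$ while reading at most $\mathrm{OPT}(\sigma)-n$ bits of advice, where costs are measured in the full cost model.
   Context: Static list update problem: a list contains $l$ distinct items in some initial order; a request sequence $\sigma=\langle\sigma_1,\dots,\sigma_n\rangle$ of items of the list must be served in order (online: when serving $\sigma_t$ the algorithm does not know $\sigma_{t+1},\dots$). Serving a request to the item currently at position $i$ (positions $1,\dots,l$ from the front) costs $i$ in the full cost model and $i-1$ in the partial cost model. Immediately after an access, the accessed item may be moved to any position closer to the front at no cost (free exchange); at any time, two adjacent items may be swapped at cost $1$ (paid exchange). For an algorithm $A$, $A(\sigma)$ denotes its total cost on $\sigma$, and $\mathrm{OPT}(\sigma)$ denotes the minimum total cost of any offline algorithm (knowing $\sigma$ in advance) serving $\sigma$ from the same initial list. Advice model: before serving, a benevolent oracle that knows the whole sequence $\sigma$ writes an infinite binary string (the advice tape); the online algorithm may read bits from the tape at any time. The number of advice bits read on $\sigma$ is the length of the shortest prefix of the tape containing all bits accessed. *)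

(* Defs.v *)
From mathcomp Require Import all_boot.
Set Implicit Arguments. Unset Strict Implicit. Unset Printing Implicit Defensive.

Section ListUpdate.
Variable T : eqType.

(* One time step of an algorithm serving a request x:
   - [swaps]: a sequence of paid exchanges, performed (in order) before the
     access; swap k exchanges the items at 0-based positions k and k+1 and
     costs 1 (an out-of-range swap costs 1 and does nothing);
   - the access to x, costing its 1-based position (full cost model);
   - [mvto]: free exchange: x is moved to 0-based position (minn mvto p),
     where p is its 0-based position at access time (i.e. only forward). *)
Record step := Step { swaps : seq nat; mvto : nat }.

Definition default_step : step := Step [::] 0.

Fixpoint swap_at (k : nat) (L : seq T) : seq T :=
  match k, L with
  | 0, x :: y :: r => y :: x :: r
  | k'.+1, x :: r => x :: swap_at k' r
  | _, _ => L
  end.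

Definition move_to (j : nat) (x : T) (L : seq T) : seq T :=
  let p := minn j (index x L) in
  let L' := rem x L in
  take p L' ++ x :: drop p L'.

Definition serve_step (a : step) (x : T) (L : seq T) : nat * seq T :=
  let L1 := foldl (fun L k => swap_at k L) L (swaps a) in
  (size (swaps a) + (index x L1).+1, move_to (mvto a) x L1).

Fixpoint total_cost (acts : seq step) (sigma : seq T) (L : seq T) : nat :=
  match sigma with
  | [::] => 0
  | x :: sigma' =>
      let a := head default_step acts in
      let: (c, L') := serve_step a x L in
      c + total_cost (behead acts) sigma' L'
  end.

Definition is_OPT (L sigma : seq T) (c : nat) : Prop :=
  (exists acts, total_cost acts sigma L = c) /\
  (forall acts, c <= total_cost acts sigma L).

(* Decision trees reading bits of the advice tape at arbitrary positions. *)
Inductive dtree (A : Type) : Type :=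
  | Leaf of A
  | Ask of nat & (bool -> dtree A).

Fixpoint eval_dtree (A : Type) (tape : nat -> bool) (d : dtree A)
  : A * seq nat :=
  match d with
  | Leaf a => (a, [::])
  | Ask p k => let: (a, ps) := eval_dtree tape (k (tape p)) in (a, p :: ps)
  end.

(* A deterministic online algorithm with advice: given the initial list and
   the requests seen so far (sigma_1 .. sigma_t, the last one being the
   current request), it decides (possibly after reading advice bits) the
   action for step t. *)
Definition online_alg := seq T -> seq T -> dtree step.

Definition alg_step (A : online_alg) (L sigma : seq T) (tape : nat -> bool)
  (t : nat) : step * seq nat :=
  eval_dtree tape (A L (take t.+1 sigma)).

Definition alg_actions (A : online_alg) (L sigma : seq T) tape : seq step :=
  [seq (alg_step A L sigma tape t).1 | t <- iota 0 (size sigma)].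

Definition alg_cost (A : online_alg) (L sigma : seq T) tape : nat :=
  total_cost (alg_actions A L sigma tape) sigma L.

(* number of advice bits read = length of the shortest tape prefix
   containing all accessed positions *)
Definition advice_read (A : online_alg) (L sigma : seq T) tape : nat :=
  \max_(p <- flatten [seq (alg_step A L sigma tape t).2
                     | t <- iota 0 (size sigma)]) p.+1.

End ListUpdate.

(* Main.v *)
Require Import Defs.
From mathcomp Require Import all_boot zify.
Set Implicit Arguments. Unset Strict Implicit. Unset Printing Implicit Defensive.

Section S.
Variable T : eqType.
Implicit Types (A B C M N X Y : seq T) (x u v : T).

Definition dp A B : nat :=
  \sum_(u <- A) \sum_(v <- A) ((index u A < index v A) && (index v B < index u B)).

Lemma index_filter_lt (P : pred T) A u v : P u -> P v ->
  (index u (filter P A) < index v (filter P A)) = (index u A < index v A).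
Proof.
move=> Pu Pv; elim: A => [|a A IH] //=.
case Pa: (P a) => /=.
- by case: (a == u); case: (a == v).
- have au : a != u by apply/eqP => E; rewrite E Pu in Pa.
  have av : a != v by apply/eqP => E; rewrite E Pv in Pa.
  by rewrite (negbTE au) (negbTE av) ltnS.
Qed.

Lemma map_index_iota A : uniq A -> [seq index u A | u <- A] = iota 0 (size A).
Proof.
elim: A => [|a A IH] //= /andP[naA uA]; rewrite eqxx; congr (_ :: _).
rewrite -(addn0 1) iotaDl -IH // -map_comp; apply/eq_in_map => u uA' /=.
by have -> : (a == u) = false by apply/eqP => E; rewrite E uA' in naA.
Qed.

Lemma sum_iota_lt n k : \sum_(i <- iota 0 n) (i < k) = minn n k.
Proof.
elim: n => [|n IH]; first by rewrite big_nil min0n.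
rewrite -addn1 iotaD big_cat /= big_cons big_nil IH add0n.
case: (ltnP n k) => h; lia.
Qed.

Lemma count_before A x : uniq A -> x \in A ->
  \sum_(u <- A) (index u A < index x A) = index x A.
Proof.
move=> uA xA.
rewrite -(big_map (fun u => index u A) xpredT (fun i => (i < index x A) : nat)).
rewrite map_index_iota // sum_iota_lt; rewrite -index_mem in xA; lia.
Qed.

Lemma leq_sum_in (I : eqType) (r : seq I) (F G : I -> nat) :
  (forall i, i \in r -> F i <= G i) -> \sum_(i <- r) F i <= \sum_(i <- r) G i.
Proof. by move=> h; rewrite big_seq [X in _ <= X]big_seq; apply: leq_sum. Qed.

Lemma eq_sum_in (I : eqType) (r : seq I) (F G : I -> nat) :
  (forall i, i \in r -> F i = G i) -> \sum_(i <- r) F i = \sum_(i <- r) G i.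
Proof. by move=> h; rewrite big_seq [X in _ = X]big_seq; apply: eq_bigr. Qed.

Lemma perm_sum (I : eqType) (r1 r2 : seq I) (F : I -> nat) :
  perm_eq r1 r2 -> \sum_(i <- r1) F i = \sum_(i <- r2) F i.
Proof. exact: perm_big. Qed.

Lemma dp_refl A : dp A A = 0.
Proof. by rewrite /dp big1 // => u _; rewrite big1 // => v _; case: ltngtP. Qed.

Lemma index_total A u v : u \in A -> v \in A -> u != v ->
  (index u A < index v A) || (index v A < index u A).
Proof.
move=> uA vA uv; case: ltngtP => // E; exfalso.
by move/eqP: uv; apply; rewrite -(nth_index u uA) E nth_index.
Qed.

Lemma dp_tri A B C : uniq A -> perm_eq A B -> perm_eq A C ->
  dp A C <= dp A B + dp B C.
Proof.
move=> uA pAB pAC; have pBA : perm_eq B A by rewrite perm_sym.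
rewrite /dp [X in _ <= _ + X](perm_big A pBA) /=.
rewrite -big_split /=; apply: leq_sum_in => u uA'.
rewrite [X in _ <= _ + X](perm_big A pBA) -big_split /=.
apply: leq_sum_in => v vA.
have uB : u \in B by rewrite -(perm_mem pAB) uA'.

have vB : v \in B by rewrite -(perm_mem pAB).
case: (eqVneq u v) => [->|uv]; first by rewrite ltnn.
have := index_total uB vB uv.
case: (index u A < index v A); case: (index v C < index u C);
 case: (index v B < index u B); case: (index u B < index v B) => //=.
Qed.

Lemma dp_cons A b B : uniq A -> perm_eq A (b :: B) ->
  dp A (b :: B) = index b A + dp (rem b A) B.
Proof.
move=> uA pA.
have bA : b \in A by rewrite (perm_mem pA) mem_head.
set A' := rem b A.
have pA' : perm_eq A (b :: A') := perm_to_rem bA.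
have ubA' : uniq (b :: A') by rewrite -(perm_uniq pA').
move: (ubA') => /= /andP[nbA' _].
have nb : forall u, u \in A' -> (b == u) = false.
  by move=> u uA1; apply/eqP => E; rewrite E uA1 in nbA'.
have remf : A' = filter (predC1 b) A by rewrite /A' rem_filter.
rewrite /dp (perm_sum _ pA') big_cons.
rewrite big1; last first.
  by move=> v _; rewrite index_head ltn0 andbF.
rewrite add0n.
under eq_bigr do rewrite (perm_sum _ pA') big_cons.
rewrite big_split /=; congr (_ + _).
- have cb := count_before uA bA.
  rewrite (perm_sum _ pA') big_cons ltnn add0n in cb.
  rewrite -[RHS]cb; apply: eq_sum_in => u uA'' /=.
  by rewrite (nb u uA'') (_ : b == b = true) ?andbT //; apply/eqP.
- apply: eq_sum_in => u uA''; apply: eq_sum_in => v vA'' /=.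
  rewrite !nb // ltnS remf !index_filter_lt //= -?remf.
  + by rewrite eq_sym nb.
  + by rewrite eq_sym nb.
Qed.

Definition swl A s := foldl (fun (L : seq T) k => swap_at k L) A s.

Lemma perm_swap2 (a b : T) r : perm_eq (a :: b :: r) (b :: a :: r).
Proof. by rewrite -[a :: b :: r]/([:: a] ++ [:: b] ++ r) perm_catCA. Qed.

Lemma swap_at_perm k A : perm_eq A (swap_at k A).
Proof.
elim: k A => [|k IH] [|a r] //=.
- by case: r => [|b r] //; exact: perm_swap2.
- by rewrite perm_cons IH.
Qed.

Lemma swl_perm s A : perm_eq A (swl A s).
Proof.
elim: s A => [|k s IH] A /=; first exact: perm_refl.
exact: perm_trans (swap_at_perm k A) (IH _).
Qed.

Lemma swl_cat A s1 s2 : swl A (s1 ++ s2) = swl (swl A s1) s2.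
Proof. exact: foldl_cat. Qed.

Lemma swap_at_cat (P : seq T) k X : swap_at (size P + k) (P ++ X) = P ++ swap_at k X.
Proof. by elim: P => [|a P IH] //=; rewrite ?addSn IH. Qed.

Lemma swl_shift (P : seq T) s X : swl (P ++ X) (map (addn (size P)) s) = P ++ swl X s.
Proof. by elim: s X => [|k s IH] X //=; rewrite swap_at_cat IH. Qed.

Lemma bubble (x0 : T) i A : i < size A ->
  swl A (rev (iota 0 i)) = nth x0 A i :: take i A ++ drop i.+1 A.
Proof.
elim: i A => [|i IH] [|a A] //= h.
- by rewrite drop0.
- rewrite -(addn0 1) iotaDl rev_cons -cats1 -map_rev swl_cat.
  rewrite (swl_shift [:: a]) IH //.
Qed.

Lemma dp_swap k A : uniq A -> dp A (swap_at k A) <= 1.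
Proof.
elim: k A => [|k IH] [|a r] uA /=; try by rewrite dp_refl.
- case: r uA => [|b r] uA; first by rewrite dp_refl.
  rewrite dp_cons //; last exact: perm_swap2.
  move: uA => /= /andP[]; rewrite inE negb_or => /andP[ab _] _.
  by rewrite /= (negbTE ab) eqxx dp_refl.
- rewrite dp_cons //; last by rewrite perm_cons swap_at_perm.
  rewrite index_head /= eqxx add0n; apply: IH.
  by case/andP: uA.
Qed.

Lemma dp_swl s A : uniq A -> dp A (swl A s) <= size s.
Proof.
elim: s A => [|k s IH] A uA /=; first by rewrite dp_refl.
apply: leq_trans (dp_tri uA (swap_at_perm k A) _) _.
  exact: perm_trans (swap_at_perm k A) (swl_perm s _).
rewrite -add1n leq_add ?dp_swap // IH //.
by rewrite -(perm_uniq (swap_at_perm k A)).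
Qed.


Fixpoint sortswaps A B : seq nat :=
  match B with
  | [::] => [::]
  | b :: B' => rev (iota 0 (index b A)) ++ map (addn 1) (sortswaps (rem b A) B')
  end.

Lemma sortswapsP B A : uniq A -> perm_eq A B ->
  swl A (sortswaps A B) = B /\ size (sortswaps A B) = dp A B.
Proof.
elim: B A => [|b B IH] A uA pAB /=.
  have -> : A = [::] by apply/nilP; rewrite /nilp (perm_size pAB).
  by rewrite /dp big_nil.
have bA : b \in A by rewrite (perm_mem pAB) mem_head.
have pA' := perm_to_rem bA.
have uA' : uniq (rem b A) by apply: rem_uniq.
have pA'B : perm_eq (rem b A) B.
  have h : perm_eq (b :: rem b A) A by rewrite perm_sym.
  by rewrite -(perm_cons b); exact: perm_trans h pAB.
have [IH1 IH2] := IH _ uA' pA'B.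
split.
- rewrite swl_cat (bubble b) ?index_mem // nth_index // -remE.
  by rewrite (swl_shift [:: b]) IH1.
- by rewrite size_cat size_rev size_iota size_map IH2 dp_cons.
Qed.

Lemma rem_pivot x X Y : x \notin X -> rem x (X ++ x :: Y) = X ++ Y.
Proof.
elim: X => [|a X IH] /=; first by rewrite eqxx.
rewrite inE negb_or => /andP[xa xX]; rewrite eq_sym (negbTE xa) IH //.
Qed.

Lemma decomp3 A x q : x \in A -> q <= index x A ->
  A = take q A ++ take (index x A - q) (drop q A) ++ x :: drop (index x A).+1 A.
Proof.
move=> xA hq.
have hp : index x A < size A by rewrite index_mem.
rewrite catA -takeD subnKC // -[x]/(x) -{2}(nth_index x xA) -drop_nth //.
by rewrite cat_take_drop.
Qed.

Lemma move_to_facts j x A : x \in A ->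
  let M := move_to j x A in
  [/\ M = swl A (map (addn (minn j (index x A)))
                   (rev (iota 0 (index x A - minn j (index x A))))),
     index x M = minn j (index x A) & perm_eq A M].
Proof.
move=> xA M.
set p := index x A; set q := minn j p.
have hq : q <= p by rewrite /q geq_minr.
have hp : p < size A by rewrite index_mem.
set P1 := take q A; set P2 := take (p - q) (drop q A); set D := drop p.+1 A.
have eA : A = P1 ++ P2 ++ x :: D by apply: decomp3.
have sP1 : size P1 = q by rewrite /P1 size_takel // ltnW // (leq_ltn_trans hq).
have sP2 : size P2 = p - q.
  by rewrite /P2 size_takel // size_drop; apply: leq_sub2r; apply: ltnW.
have nx : x \notin P1 ++ P2.
  apply/negP => h.
  have := index_cat x (P1 ++ P2) (x :: D); rewrite catA in eA; rewrite -eA h.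
  have := index_size x (P1 ++ P2); rewrite -/p size_cat sP1 sP2 => h1 h2.
  have := index_mem x (P1 ++ P2); rewrite h -h2 size_cat sP1 sP2 subnKC //.
  by rewrite ltnn.
have remA : rem x A = P1 ++ P2 ++ D.
  by rewrite eA catA rem_pivot // catA.
have eM : M = P1 ++ x :: P2 ++ D.
  rewrite /M /move_to -/p -/q remA takel_cat ?sP1 // take_oversize ?sP1 //.
  by rewrite drop_size_cat.
split.
- rewrite eM -sP2 -sP1 {1}eA swl_shift (bubble x); last by rewrite size_cat /=; lia.
  rewrite nth_cat ltnn subnn /= take_size_cat // drop_cat ltnNge leqnSn /=.
  by rewrite subSnn drop1.
- rewrite eM index_cat.
  have -> : (x \in P1) = false by apply/negP => h; move: nx; rewrite mem_cat h.
  by rewrite /= eqxx addn0 sP1.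
- rewrite eM {1}eA perm_cat2l -[x :: P2 ++ D]cat1s -[x :: D]cat1s.
  by rewrite perm_catCA.
Qed.

Lemma idx3 X x Y y : index y (X ++ x :: Y) =
  if y \in X then index y X else if x == y then size X else size X + (index y Y).+1.
Proof. by rewrite index_cat /=; case: (y \in X) => //; case: (x == y); rewrite ?addn0. Qed.

Lemma between F Dr x N (Q : pred T) u v : uniq (F ++ x :: Dr) ->
  (forall y, Q y = ~~ (index x N < index y N)) ->
  u \in F ++ x :: Dr -> v \in F ++ x :: Dr ->
  index u (F ++ x :: Dr) < index v (F ++ x :: Dr) -> index u N < index v N ->
  index u (filter Q F ++ x :: filter (predC Q) F ++ Dr) <
  index v (filter Q F ++ x :: filter (predC Q) F ++ Dr).
Proof.
rewrite cat_uniq => /and3P[uF hFD /andP[xD uD]].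
move: hFD; rewrite /= negb_or => /andP[xF /hasPn FD].
move=> hQ uM vM hM hN.
rewrite !idx3 !index_cat !mem_filter /=.
move: hM; rewrite !idx3.
have memF : forall y, y \in F -> index y F < size F by move=> y; rewrite index_mem.
have memD : forall y, y \in Dr -> index y Dr < size Dr by move=> y; rewrite index_mem.
have memK : forall y, y \in filter Q F -> index y (filter Q F) < size (filter Q F)
  by move=> y; rewrite index_mem.
have memS : forall y, y \in filter (predC Q) F ->
   index y (filter (predC Q) F) < size (filter (predC Q) F) by move=> y; rewrite index_mem.
move: uM vM; rewrite !mem_cat !inE.
have nxF : forall y, y \in F -> (x == y) = false.
  by move=> y yF; apply/eqP => E; rewrite E yF in xF.
have nxD : forall y, y \in Dr -> (x == y) = false.
  by move=> y yD; apply/eqP => E; rewrite E yD in xD.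
have nFD : forall y, y \in Dr -> (y \in F) = false.
  by move=> y yD; apply/negbTE; apply: FD.
have hu := hQ u; have hv := hQ v.
case/or3P => [uF'|/eqP eu|uD']; case/or3P => [vF'|/eqP ev|vD'].
- rewrite uF' vF' (nxF _ uF') (nxF _ vF').
  have hSu := memS u; have hSv := memS v; have hKu := memK u; have hKv := memK v.
  rewrite !mem_filter /= uF' vF' in hSu hSv hKu hKv.
  case Qu: (Q u) in hu hSu hKu *; case Qv: (Q v) in hv hSv hKv * => /=.
  + by rewrite index_filter_lt.
  + move=> _; have := hKu isT; lia.
  + move: hu hv; case: ltnP => //; case: ltnP => //; lia.
  + by rewrite ltn_add2l ltnS index_filter_lt //= ?Qu ?Qv.
- rewrite ev uF' (nxF _ uF') (negbTE xF) eqxx.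
  have Qu : Q u by rewrite hu -ltnNge ltnW // -ev.
  rewrite Qu /= andbF => _; apply: memK; by rewrite mem_filter Qu uF'.
- rewrite uF' (nxF _ uF') (nFD _ vD') (nxD _ vD') /=.
  have hSu := memS u; have hKu := memK u.
  rewrite !mem_filter /= uF' in hSu hKu.
  case Qu: (Q u) in hSu hKu * => /= _.
  + have := hKu isT; rewrite !andbF; lia.
  + have := hSu isT; rewrite !andbF; lia.
- rewrite eu (negbTE xF) eqxx vF' => h; have := memF v vF'; lia.
- by move: hN; rewrite eu ev ltnn.
- rewrite eu (negbTE xF) eqxx (nFD _ vD') (nxD _ vD') /= !andbF => _; lia.
- rewrite (nFD _ uD') (nxD _ uD') vF' => h; have := memF v vF'; lia.
- rewrite ev (nFD _ uD') (nxD _ uD') (negbTE xF) eqxx /= ?andbF => h; lia.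
- rewrite (nFD _ uD') (nxD _ uD') (nFD _ vD') (nxD _ vD') /= !andbF => h; lia.
Qed.

Definition st M x (bs : seq bool) : seq T :=
  let p := index x M in let F := take p M in
  mask (map negb bs) F ++ x :: mask bs F ++ drop p.+1 M.

Definition stbits M x N : seq bool :=
  [seq index x N < index y N | y <- take (index x M) M].

Lemma perm_sym_true (A B : seq T) : perm_eq A B -> perm_eq B A.
Proof. by rewrite perm_sym. Qed.

Lemma geo_bool (a a' n n' z z' : bool) :
  (a && n -> z) -> (a' && n' -> z') -> ~~ (z && z') -> ~~ (n && n') ->
  ~~ (a && a') -> n || n' -> z || z' -> a || a' ->
  (a && z') + (z && n') <= (a && n').
Proof. by case: a; case: a'; case: n; case: n'; case: z; case: z'. Qed.

Lemma asym_lt (m n : nat) : ~~ ((m < n) && (n < m)).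
Proof. by case: ltngtP. Qed.

Lemma idx_before A B x : uniq A -> perm_eq A B -> x \in A ->
  index x A <= dp A B + index x B.
Proof.
move=> uA pAB xA.
have xB : x \in B by rewrite -(perm_mem pAB).
have uB : uniq B by rewrite -(perm_uniq pAB).
have e1 := count_before uA xA; have e2 := count_before uB xB.
rewrite (perm_sum _ (perm_sym_true pAB)) in e2.
apply: (@leq_trans (\sum_(u <- A) ((index u A < index x A) && (index x B < index u B))
   + \sum_(u <- A) (index u B < index x B))).
  rewrite -{1}e1 -big_split /=; apply: leq_sum_in => u uA'.
  have uB' : u \in B by rewrite -(perm_mem pAB).
  case: (eqVneq u x) => [->|ux]; first by rewrite ltnn.
  have := index_total uB' xB ux.
  by case: (index u A < index x A); case: (index x B < index u B);
    case: (index u B < index x B).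
rewrite e2 leq_add2r /dp.
apply: leq_sum_in => u _.
rewrite (perm_sum _ (perm_to_rem xA)) big_cons; exact: leq_addr.
Qed.


Lemma st_normal M x N : uniq M -> x \in M -> perm_eq M N ->
  let N0 := st M x (stbits M x N) in
  [/\ perm_eq M N0, dp M N0 + dp N0 N <= dp M N, index x N0 <= index x N
     & size (stbits M x N) = index x M].
Proof.
move=> uM xM pMN N0.
have hp : index x M < size M by rewrite index_mem.
have eM : M = take (index x M) M ++ x :: drop (index x M).+1 M.
  by rewrite -{1}(cat_take_drop (index x M) M) (drop_nth x) // nth_index.
pose P := fun y => index x N < index y N.
pose Q := fun y => ~~ P y.
have eN0 : N0 = filter Q (take (index x M) M) ++ x ::
     filter (predC Q) (take (index x M) M) ++ drop (index x M).+1 M.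
  rewrite /N0 /st /stbits; congr (_ ++ x :: _ ++ _).
  - by rewrite -map_comp filter_mask.
  - by rewrite (@eq_filter _ (predC Q) P) ?filter_mask // => y; exact: negbK.
clearbody N0.
have -> : size (stbits M x N) = index x M.
  by rewrite size_map size_takel // ltnW.
move: eM eN0; move: (take _ M) (drop _ M) => F Dr eM eN0.
have xF : x \notin F.
  by move: uM; rewrite {1}eM cat_uniq /= negb_or => /and3P[_ /andP[]].
have pN0 : perm_eq M N0.
  rewrite eN0 {1}eM -[x :: Dr]cat1s -[x :: _ ++ Dr]cat1s perm_catCA perm_sym.
  rewrite perm_catCA /= perm_cons catA perm_cat2r; first [by rewrite perm_filterC | by rewrite perm_sym perm_filterC].
have uN0 : uniq N0 by rewrite -(perm_uniq pN0).
have uN : uniq N by rewrite -(perm_uniq pMN).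
split => //.
- have pNM := perm_sym_true pN0.
  rewrite /dp [X in _ + X <= _](perm_big M pNM) /=.
  rewrite -big_split /=; apply: leq_sum_in => u uM'.
  rewrite [X in _ + X <= _](perm_big M pNM) -big_split /=.
  apply: leq_sum_in => v vM'.
  have uN' : u \in N by rewrite -(perm_mem pMN).
  have vN' : v \in N by rewrite -(perm_mem pMN).
  have uN0' : u \in N0 by rewrite -(perm_mem pN0).
  have vN0' : v \in N0 by rewrite -(perm_mem pN0).
  case: (eqVneq u v) => [->|uv]; first by rewrite !ltnn.
  have vu : v != u by rewrite eq_sym.
  have uM2 : u \in F ++ x :: Dr by rewrite -eM.
  have vM2 : v \in F ++ x :: Dr by rewrite -eM.
  have uM3 : uniq (F ++ x :: Dr) by rewrite -eM.
  apply: (@geo_bool _ (index v M < index u M) (index u N < index v N) _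
     (index u N0 < index v N0)); rewrite ?asym_lt ?index_total //.
  + case/andP; rewrite eN0 {1 2}eM; exact: (@between F Dr x N Q).
  + case/andP; rewrite eN0 {1 2}eM; exact: (@between F Dr x N Q).
- rewrite eN0 idx3.
  have -> : (x \in filter Q F) = false by rewrite mem_filter (negbTE xF) andbF.
  rewrite eqxx.
  have xN : x \in N by rewrite -(perm_mem pMN).
  have hxN : index x N <= size N by apply: ltnW; rewrite index_mem.
  rewrite -[X in _ <= X](size_takel hxN).
  apply: uniq_leq_size; first by apply: filter_uniq; move: uM; rewrite eM cat_uniq => /andP[].
  move=> y; rewrite mem_filter => /andP[Qy yF].
  have yM : y \in M by rewrite eM mem_cat yF.
  have yN : y \in N by rewrite -(perm_mem pMN).
  rewrite in_take //.
  have yx : y != x by apply/eqP => E; move: xF; rewrite -E yF.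
  move: Qy; rewrite /Q /P -leqNgt leq_eqVlt => /orP[/eqP E|] //.
  by exfalso; move/eqP: yx; apply; rewrite -(nth_index x yN) E nth_index.
Qed.

Fixpoint gcost M (sig : seq T) (Ms : seq (seq T)) : nat :=
  match sig, Ms with
  | x :: sig', N :: Ms' => dp M N + (index x N).+1 + gcost N sig' Ms'
  | _, _ => 0
  end.

Fixpoint lists_of (acts : seq step) (sig : seq T) L : seq (seq T) :=
  match sig with
  | [::] => [::]
  | x :: sig' => let L' := (serve_step (head default_step acts) x L).2 in
                 L' :: lists_of (behead acts) sig' L'
  end.

Lemma lower acts sig L : uniq L -> all (fun x => x \in L) sig ->
  [/\ gcost L sig (lists_of acts sig L) <= total_cost acts sig L,
      size (lists_of acts sig L) = size sig &
      all (perm_eq L) (lists_of acts sig L)].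
Proof.
elim: sig acts L => [|x sig IH] acts L uL /= hall; first by [].
case/andP: hall => xL hall.
case: (head default_step acts) => sw j.
rewrite /serve_step /= -/(swl L sw).
set L1 := swl L sw.
have pL1 : perm_eq L L1 := swl_perm sw L.
have xL1 : x \in L1 by rewrite -(perm_mem pL1).
have uL1 : uniq L1 by rewrite -(perm_uniq pL1).
have [eM iM pM] := move_to_facts j xL1.
set M := move_to j x L1 in eM iM pM *.
have pLM : perm_eq L M := perm_trans pL1 pM.
have uM : uniq M by rewrite -(perm_uniq pLM).
have hall' : all (fun y => y \in M) sig.
  by apply/allP => y /(allP hall); rewrite (perm_mem pLM).
have [IH1 IH2 IH3] := IH (behead acts) M uM hall'.
split.
  apply: leq_add; last exact: IH1; rewrite !addnS ltnS.
  have h1 := dp_tri uL pL1 pLM.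
  have h2 : dp L L1 <= size sw := dp_swl sw uL.
  have h3 : dp L1 M <= index x L1 - minn j (index x L1).
    by rewrite [in X in dp _ X]eM; apply: leq_trans (dp_swl _ uL1) _;
       rewrite size_map size_rev size_iota.
  rewrite iM; have := geq_minr j (index x L1); lia.
- by rewrite IH2.
- rewrite pLM /=; apply/allP => N hN; rewrite (perm_trans pLM) //.
  exact: (allP IH3).
Qed.

Fixpoint stcost M (sig : seq T) (bss : seq (seq bool)) : nat :=
  match sig, bss with
  | x :: sig', bs :: bss' =>
      let N := st M x bs in dp M N + (index x N).+1 + stcost N sig' bss'
  | _, _ => 0
  end.

Fixpoint good M (sig : seq T) (bss : seq (seq bool)) : bool :=
  match sig, bss with
  | x :: sig', bs :: bss' =>
      [&& size bs == index x M, perm_eq M (st M x bs) & good (st M x bs) sig' bss']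
  | [::], [::] => true
  | _, _ => false
  end.

Fixpoint st_acts M (sig : seq T) (bss : seq (seq bool)) : seq step :=
  match sig, bss with
  | x :: sig', bs :: bss' =>
      let N := st M x bs in Step (sortswaps M N) (index x N) :: st_acts N sig' bss'
  | _, _ => [::]
  end.

Lemma gcost_tri sig Ms A B : uniq A -> perm_eq A B -> all (perm_eq A) Ms ->
  gcost A sig Ms <= dp A B + gcost B sig Ms.
Proof.
case: sig Ms => [|x sig] [|N Ms] uA pAB /= hall //.
case/andP: hall => pAN _.
have := dp_tri uA pAB pAN; lia.
Qed.

Lemma normalize sig M Ms : uniq M -> all (fun x => x \in M) sig ->
  size Ms = size sig -> all (perm_eq M) Ms ->
  exists bss, good M sig bss /\ stcost M sig bss <= gcost M sig Ms.
Proof.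
elim: sig M Ms => [|x sig IH] M [|N Ms] //= uM hall hs hperm.
  by exists [::].
case/andP: hall => xM hall; case/andP: hperm => pMN hperm.
have [p0 geo ix sz] := st_normal uM xM pMN.
set N0 := st M x (stbits M x N) in p0 geo ix sz *.
have uN0 : uniq N0 by rewrite -(perm_uniq p0).
have hall' : all (fun y => y \in N0) sig.
  by apply/allP => y /(allP hall); rewrite (perm_mem p0).
have hperm' : all (perm_eq N0) Ms.
  apply/allP => K hK; apply: perm_trans (perm_sym_true p0) _; exact: (allP hperm).
have [bss [g c]] := IH N0 Ms uN0 hall' (eq_add_S _ _ hs) hperm'.
exists (stbits M x N :: bss) => /=; split.
  by rewrite sz eqxx p0 -/N0 g.
rewrite -/N0.
have pN0N : perm_eq N0 N := perm_trans (perm_sym_true p0) pMN.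
have := gcost_tri sig uN0 pN0N hperm'.
lia.
Qed.

Lemma good_size M sig bss : good M sig bss -> size bss = size sig.
Proof.
by elim: sig M bss => [|x sig IH] M [|bs bss] //= /and3P[_ _ /IH ->].
Qed.

Lemma realize sig M bss : uniq M -> all (fun x => x \in M) sig -> good M sig bss ->
  total_cost (st_acts M sig bss) sig M = stcost M sig bss /\
  size sig + sumn (map size bss) <= stcost M sig bss.
Proof.
elim: sig M bss => [|x sig IH] M [|bs bss] //= uM hall /and3P[/eqP sz pN g].
case/andP: hall => xM hall.
set N := st M x bs in pN g *.
have uN : uniq N by rewrite -(perm_uniq pN).
have xN : x \in N by rewrite -(perm_mem pN).
have hall' : all (fun y => y \in N) sig.
  by apply/allP => y /(allP hall); rewrite (perm_mem pN).
have [IH1 IH2] := IH N bss uN hall' g.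
have [e1 e2] := sortswapsP uM pN.
rewrite /serve_step /= -/(swl M (sortswaps M N)) e1 e2.
have [eM _ _] := move_to_facts (index x N) xN.
have -> : move_to (index x N) x N = N by rewrite eM minnn subnn.
rewrite IH1; split => //.
have := idx_before uM pN xM; lia.
Qed.

Fixpoint readbits (k pos : nat) (cont : seq bool -> dtree step) : dtree step :=
  match k with
  | 0 => cont [::]
  | k'.+1 => Ask pos (fun b => readbits k' pos.+1 (fun bs => cont (b :: bs)))
  end.

Fixpoint dec M (pos : nat) (reqs : seq T) : dtree step :=
  match reqs with
  | [::] => Leaf default_step
  | x :: r => readbits (index x M) pos (fun bs =>
      let N := st M x bs in
      match r with
      | [::] => Leaf (Step (sortswaps M N) (index x N))
      | _ => dec N (pos + index x M) r
      end)
  end.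

Lemma readbitsE tape k pos cont :
  eval_dtree tape (readbits k pos cont) =
  ((eval_dtree tape (cont (mkseq (fun i => tape (pos + i)) k))).1,
   iota pos k ++ (eval_dtree tape (cont (mkseq (fun i => tape (pos + i)) k))).2).
Proof.
elim: k pos cont => [|k IH] pos cont /=.
  by case: eval_dtree.
rewrite IH.
have -> : mkseq (fun i => tape (pos + i)) k.+1 =
          tape pos :: mkseq (fun i => tape (pos.+1 + i)) k.
  rewrite /mkseq /= addn0 -(addn0 1) iotaDl -map_comp; congr (_ :: _).
  by apply: eq_map => i /=; rewrite addnA addn1.
by [].
Qed.

Lemma bits_read tape pos (bs : seq bool) rest :
  (forall i, tape (pos + i) = nth false (bs ++ rest) i) ->
  mkseq (fun i => tape (pos + i)) (size bs) = bs.
Proof.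
move=> h; rewrite -[RHS](mkseq_nth false bs) /mkseq; apply/eq_in_map => i.
by rewrite mem_iota add0n => /andP[_ hi]; rewrite h nth_cat hi.
Qed.

Lemma decE sig M bss pos tape : good M sig bss ->
  (forall i, tape (pos + i) = nth false (flatten bss) i) ->
  forall t, t < size sig ->
  eval_dtree tape (dec M pos (take t.+1 sig)) =
  (nth default_step (st_acts M sig bss) t, iota pos (sumn (map size (take t.+1 bss)))).
Proof.
elim: sig M bss pos => [|x sig IH] M [|bs bss] pos //= /and3P[/eqP sz _ g] htape t ht.
rewrite readbitsE -sz (bits_read htape).
case: t ht => [|t] ht /=.
  by rewrite take0 /= take0 /= addn0 cats0.
case: sig IH g ht => [|y sig] IH g ht //.
rewrite -[take t.+1 (y :: sig)]/(y :: take t sig) /= -/(take t.+1 (y :: sig)).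
rewrite sz (IH _ bss) //.
- by rewrite /= iotaD.
- by move=> i; rewrite -addnA -sz htape nth_cat ltnNge leq_addr /= addKn.
Qed.

Lemma size_st_acts M sig bss : good M sig bss -> size (st_acts M sig bss) = size sig.
Proof.
by elim: sig M bss => [|x sig IH] M [|bs bss] //= /and3P[_ _ /IH ->].
Qed.

Lemma sumn_take (s : seq nat) k : sumn (take k s) <= sumn s.
Proof. by rewrite -{2}(cat_take_drop k s) sumn_cat leq_addr. Qed.

End S.

Theorem theorem1 :
  forall T : eqType, exists A : online_alg T,
    forall (L sigma : seq T) (opt : nat),
      uniq L -> all (fun x => x \in L) sigma ->
      is_OPT L sigma opt ->
      exists tape : nat -> bool,
        alg_cost A L sigma tape = opt /\
        advice_read A L sigma tape <= opt - size sigma.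
Proof.
move=> T; exists (fun L pre => dec L 0 pre).
move=> L sig opt uL hall [[acts0 e0] hmin].
have [lo1 lo2 lo3] := lower acts0 uL hall.
have [bss [g c]] := normalize uL hall lo2 lo3.
have [r1 r2] := realize uL hall g.
pose tape := fun i => nth false (flatten bss) i.
exists tape.
have hact : alg_actions (fun L pre => dec L 0 pre) L sig tape = st_acts L sig bss.
  rewrite /alg_actions -[RHS](mkseq_nth default_step) size_st_acts // /mkseq.
  apply/eq_in_map => t; rewrite mem_iota add0n => /andP[_ ht].
  by rewrite /alg_step (decE g) //.
have costeq : alg_cost (fun L pre => dec L 0 pre) L sig tape = opt.
  rewrite /alg_cost hact r1; apply/eqP; rewrite eqn_leq; apply/andP; split.
  - by rewrite -e0; apply: leq_trans c lo1.
  - by rewrite -r1; apply: hmin.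
split => //.
rewrite /advice_read.
apply: (@leq_trans (sumn (map size bss))); last first.
  by rewrite -costeq /alg_cost hact r1; lia.
apply/bigmax_leqP_seq => p hp _.
move/flattenP: hp => [ps /mapP[t]]; rewrite mem_iota add0n => /andP[_ ht] -> hp.
move: hp; rewrite /alg_step (decE g) // mem_iota add0n => /andP[_ hp].
apply: leq_trans hp _; rewrite ?map_take; exact: sumn_take.
Qed.
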